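(* Let $\kappa$ be a regular uncountable cardinal and $I$ an ideal on $\kappa$ with $I\subseteq NS_\kappa$, and let $L=\{\lambda+1:\lambda<\kappa\text{ a limit ordinal}\}$. Suppose $L\in P(I)$. Then for every stationary set $Q\subseteq\kappa$ consisting of limit ordinals there is $Y\subseteq L$ with $Y\in I$, $B(Y)\subseteq Q$, and $B(Y)$ stationary, where $B(Y)=\{\lambda:\lambda+1\in Y\}$.
   Context: An ideal on $\kappa$ is a family of subsets of $\kappa$ closed under subsets and finite unions, which is $<\kappa$-complete and contains all singletons. $NS_\kappa$ is the ideal of nonstationary subsets of $\kappa$. For $A\subseteq\kappa$ and $X_\alpha\subseteq\kappa$, $\bigtriangledown_{\alpha\in A}X_\alpha=\{\xi<\kappa:\exists\alpha<\xi\,(\alpha\in A\wedge \xi\in X_\alpha)\}$. An ideal is pleasant if whenever $A$ and all $X_\alpha$ belong to it, so does $\bigtriangledown_{\alpha\in A}X_\alpha$. The pleasant closure $P(I)$ is built in stages: $P_0(I)=I$; $P_{\beta+1}(I)$ is the ideal generated by $P_\beta(I)$ together with all $\bigtriangledown_{\alpha\in T}X_\alpha$ with $T\in I$ and each $X_\alpha\in P_\beta(I)$; unions at limit stages; $P(I)=\bigcup_\beta P_\beta(I)$ (the smallest pleasant ideal containing $I$). *)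

(* Defs.v *)
(* The regular uncountable cardinal kappa is modelled as a
   type T (the set of ordinals < kappa) with a strict well-order lt. *)
From Stdlib Require Import Classical.

Section KappaDefs.
Context {T : Type}.
Variable lt : T -> T -> Prop.

Definition le (a b : T) : Prop := lt a b \/ a = b.

Definition strict_well_order : Prop :=
  (forall a, ~ lt a a) /\
  (forall a b c, lt a b -> lt b c -> lt a c) /\
  (forall a b, lt a b \/ a = b \/ lt b a) /\
  well_founded lt.

Definition injective {A B : Type} (f : A -> B) : Prop :=
  forall x y, f x = f y -> x = y.

Definition is_cardinal : Prop :=
  forall beta : T, ~ exists f : T -> {a : T | lt a beta}, injective f.

Definition uncountable : Prop := ~ exists f : T -> nat, injective f.

Definition cofinal (S : T -> Prop) : Prop :=
  forall beta, exists a, S a /\ le beta a.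

Definition regular : Prop :=
  forall S : T -> Prop, cofinal S -> exists f : T -> {a : T | S a}, injective f.

Definition regular_uncountable_cardinal : Prop :=
  strict_well_order /\ is_cardinal /\ regular /\ uncountable.

Definition is_limit (g : T) : Prop :=
  (exists n, lt n g) /\ (forall n, lt n g -> exists r, lt n r /\ lt r g).

Definition is_succ (l m : T) : Prop :=
  lt l m /\ forall n, lt l n -> le m n.

Definition closed (C : T -> Prop) : Prop :=
  forall g, is_limit g ->
    (forall n, lt n g -> exists c, C c /\ lt n c /\ lt c g) -> C g.

Definition club (C : T -> Prop) : Prop := closed C /\ cofinal C.

Definition stationary (S : T -> Prop) : Prop :=
  forall C, club C -> exists x, S x /\ C x.

Definition nonstationary (S : T -> Prop) : Prop := ~ stationary S.

Definition is_ideal (I : (T -> Prop) -> Prop) : Prop :=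
  (forall A B, I B -> (forall x, A x -> B x) -> I A) /\
  (forall A B, I A -> I B -> I (fun x => A x \/ B x)) /\
  (forall (beta : T) (X : T -> T -> Prop),
      (forall a, lt a beta -> I (X a)) ->
      I (fun x => exists a, lt a beta /\ X a x)) /\
  (forall a, I (fun x => x = a)).

Definition diag_union (A : T -> Prop) (X : T -> T -> Prop) : T -> Prop :=
  fun xi => exists a, lt a xi /\ A a /\ X a xi.

(* pleasant closure P(I): the union of the stages P_beta(I), i.e. the least
   family containing I, closed under the ideal-generation operations and under
   diagonal unions nabla_{a in A} X_a with A in I and all X_a in the family. *)
Inductive Pcl (I : (T -> Prop) -> Prop) : (T -> Prop) -> Prop :=
| Pcl_base : forall A, I A -> Pcl I A
| Pcl_sub : forall A B, Pcl I B -> (forall x, A x -> B x) -> Pcl I A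
| Pcl_union2 : forall A B, Pcl I A -> Pcl I B -> Pcl I (fun x => A x \/ B x)
| Pcl_union : forall (beta : T) (X : T -> T -> Prop),
    (forall a, lt a beta -> Pcl I (X a)) ->
    Pcl I (fun x => exists a, lt a beta /\ X a x)
| Pcl_diag : forall (A : T -> Prop) (X : T -> T -> Prop),
    I A -> (forall a, A a -> Pcl I (X a)) -> Pcl I (diag_union A X).

Definition Lset : T -> Prop :=
  fun m => exists l, is_limit l /\ is_succ l m.

Definition Bset (Y : T -> Prop) : T -> Prop :=
  fun l => exists m, Y m /\ is_succ l m.

End KappaDefs.

(* Main.v *)
Require Import Defs.
From Stdlib Require Import Classical ClassicalEpsilon Lia PeanoNat.

Lemma fchoice {A B : Type} (R : A -> B -> Prop) :
  (forall a, exists b, R a b) -> exists f : A -> B, forall a, R a (f a).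
Proof.
  intro H. exists (fun a => proj1_sig (constructive_indefinite_description _ (H a))).
  intro a. exact (proj2_sig (constructive_indefinite_description _ (H a))).
Qed.

Lemma sig_ext {A : Type} {P : A -> Prop} (u v : {x | P x}) :
  proj1_sig u = proj1_sig v -> u = v.
Proof. destruct u as [a ha], v as [b hb]; simpl; intro e; subst; f_equal; apply proof_irrelevance. Qed.


Lemma o_irr {T} {lt : T -> T -> Prop} (hk : regular_uncountable_cardinal lt) a : ~ lt a a.
Proof. destruct hk as ((h&_)&_). apply h. Qed.
Lemma o_tr {T} {lt : T -> T -> Prop} (hk : regular_uncountable_cardinal lt) a b c :
  lt a b -> lt b c -> lt a c.
Proof. destruct hk as ((_&h&_)&_). apply h. Qed.
Lemma o_tot {T} {lt : T -> T -> Prop} (hk : regular_uncountable_cardinal lt) a b :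
  lt a b \/ a = b \/ lt b a.
Proof. destruct hk as ((_&_&h&_)&_). apply h. Qed.
Lemma o_le_lt {T} {lt : T -> T -> Prop} (hk : regular_uncountable_cardinal lt) a b c :
  le lt a b -> lt b c -> lt a c.
Proof. intros [h|h] h2; [eapply (o_tr hk); eauto| subst; auto]. Qed.
Lemma o_lt_le {T} {lt : T -> T -> Prop} (hk : regular_uncountable_cardinal lt) a b c :
  lt a b -> le lt b c -> lt a c.
Proof. intros h [h2|h2]; [eapply (o_tr hk); eauto| subst; auto]. Qed.
Lemma o_max {T} {lt : T -> T -> Prop} (hk : regular_uncountable_cardinal lt) a b :
  exists w, le lt a w /\ le lt b w /\ (w = a \/ w = b).
Proof.
  destruct (o_tot hk a b) as [h|[h|h]].
  - exists b. unfold le; auto.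
  - subst. exists b. unfold le; auto.
  - exists a. unfold le; auto.
Qed.

Lemma least {T} {lt : T -> T -> Prop} (hk : regular_uncountable_cardinal lt)
  (P : T -> Prop) x : P x -> exists m, P m /\ forall n, P n -> le lt m n.
Proof.
  intro Px. apply NNPP; intro Hno.
  destruct hk as ((hirr&htr&htot&hwf)&_).
  assert (forall y, ~ P y) as Hall.
  { intro y. induction y as [y IH] using (well_founded_ind hwf). intro Py.
    apply Hno. exists y; split; auto. intros n Pn.
    destruct (htot y n) as [h|[h|h]]; [left; auto|right; auto| exfalso; exact (IH n h Pn)]. }
  exact (Hall x Px).
Qed.

Lemma no_max {T} {lt : T -> T -> Prop} (hk : regular_uncountable_cardinal lt) :
  forall x, exists y, lt x y.
Proof.
  intro x. apply NNPP; intro H.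
  assert (Hm: forall y, ~ lt x y) by (intros y hy; apply H; eauto).
  destruct hk as ((hirr&htr&htot&hwf)&hcard&hreg&hunc).
  destruct (hreg (fun a => a = x)) as [f hf].
  { intro b. exists x. split; [reflexivity|].
    destruct (htot b x) as [h|[h|h]]; [left;auto|right;auto|exfalso; exact (Hm _ h)]. }
  apply hunc. exists (fun _ => 0). intros y z _. apply hf.
  apply sig_ext. destruct (f y) as [a ha], (f z) as [b hb]. simpl. congruence.
Qed.

Lemma succ_exists {T} {lt : T -> T -> Prop} (hk : regular_uncountable_cardinal lt) :
  forall x, exists m, is_succ lt x m.
Proof.
  intro x. destruct (no_max hk x) as [y hy].
  destruct (least hk (fun n => lt x n) y hy) as [m [h1 h2]].
  exists m. split; auto.
Qed.

Lemma succ_pred_unique {T} {lt : T -> T -> Prop} (hk : regular_uncountable_cardinal lt) l l' m :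
  is_succ lt l m -> is_succ lt l' m -> l = l'.
Proof.
  intros [h1 h2] [h1' h2'].
  destruct (o_tot hk l l') as [h|[h|h]]; auto; exfalso.
  - apply (o_irr hk m). eapply (o_le_lt hk); [apply (h2 _ h)|exact h1'].
  - apply (o_irr hk m). eapply (o_le_lt hk); [apply (h2' _ h)|exact h1].
Qed.

Lemma succ_unique {T} {lt : T -> T -> Prop} (hk : regular_uncountable_cardinal lt) l m m' :
  is_succ lt l m -> is_succ lt l m' -> m = m'.
Proof.
  intros [h1 h2] [h1' h2'].
  destruct (h2 _ h1') as [h|h]; auto.
  destruct (h2' _ h1) as [h3|h3]; auto.
  exfalso. apply (o_irr hk m). eapply (o_tr hk); eauto.
Qed.

Lemma bounded {T} {lt : T -> T -> Prop} (hk : regular_uncountable_cardinal lt)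
  (beta : T) (F : T -> T) : exists u, forall a, lt a beta -> lt (F a) u.
Proof.
  apply NNPP; intro H.
  pose (S := fun s => exists a, lt a beta /\ F a = s).
  assert (Hcof : cofinal lt S).
  { intro g. apply NNPP; intro H2. apply H. exists g. intros a ha.
    destruct (o_tot hk (F a) g) as [h|[h|h]]; auto; exfalso; apply H2; exists (F a);
      (split; [exists a; auto|]).
    - right; auto.
    - left; auto. }
  destruct hk as (hw&hcard&hreg&hunc).
  destruct (hreg S Hcof) as [f hf].
  assert (Hch : forall s : {s | S s}, exists a, lt a beta /\ F a = proj1_sig s)
    by (intro s; exact (proj2_sig s)).
  destruct (fchoice _ Hch) as [g0 hg0].
  apply (hcard beta). exists (fun t => exist (fun a => lt a beta) (g0 (f t)) (proj1 (hg0 (f t)))).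
  intros y z e. apply (f_equal (@proj1_sig _ _)) in e. simpl in e.
  apply hf. apply sig_ext. rewrite <- (proj2 (hg0 (f y))), <- (proj2 (hg0 (f z))). congruence.
Qed.

Lemma countable_bound {T} {lt : T -> T -> Prop} (hk : regular_uncountable_cardinal lt)
  (F : nat -> T) : exists u, forall n, lt (F n) u.
Proof.
  apply NNPP; intro H.
  pose (S := fun s => exists n, F n = s).
  assert (Hcof : cofinal lt S).
  { intro g. apply NNPP; intro H2. apply H. exists g. intros n.
    destruct (o_tot hk (F n) g) as [h|[h|h]]; auto; exfalso; apply H2; exists (F n);
      (split; [exists n; auto|]).
    - right; auto.
    - left; auto. }
  destruct hk as (hw&hcard&hreg&hunc).
  destruct (hreg S Hcof) as [f hf].
  assert (Hch : forall s : {s | S s}, exists n, F n = proj1_sig s)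
    by (intro s; exact (proj2_sig s)).
  destruct (fchoice _ Hch) as [g0 hg0].
  apply hunc. exists (fun t => g0 (f t)).
  intros y z e. apply hf. apply sig_ext. rewrite <- (hg0 (f y)), <- (hg0 (f z)). congruence.
Qed.

Lemma club_ext {T} {lt : T -> T -> Prop} (A B : T -> Prop) :
  (forall x, A x <-> B x) -> club lt A -> club lt B.
Proof.
  intros E [hc hf]. split.
  - intros g hg H. apply E. apply hc; auto. intros n hn. destruct (H n hn) as (c&h1&h2).
    exists c; split; auto. apply E; auto.
  - intro b. destruct (hf b) as (a&h1&h2). exists a; split; auto. apply E; auto.
Qed.

Lemma diag_cof {T} {lt : T -> T -> Prop} (hk : regular_uncountable_cardinal lt)
  (C : T -> T -> Prop) (hC : forall a, club lt (C a)) (beta : T) :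
  exists g, lt beta g /\ forall a, lt a g -> C a g.
Proof.
  assert (hm : forall p : T * T, exists c, C (fst p) c /\ lt (snd p) c).
  { intros [a gm]. simpl. destruct (no_max hk gm) as [y hy].
    destruct (proj2 (hC a) y) as (c&h1&h2). exists c; split; auto. eapply (o_lt_le hk); eauto. }
  destruct (fchoice _ hm) as [m hm'].
  assert (hh : forall gm, exists u, lt gm u /\ forall a, lt a gm -> lt (m (a, gm)) u).
  { intro gm. destruct (bounded hk gm (fun a => m (a, gm))) as [u0 hu0].
    destruct (o_max hk gm u0) as (w&h1&h2&_). destruct (no_max hk w) as [u hu].
    exists u. split; [eapply (o_le_lt hk); eauto|]. intros a ha.
    eapply (o_tr hk); [apply hu0; auto|]. eapply (o_le_lt hk); eauto. }
  destruct (fchoice _ hh) as [h hh'].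
  pose (gam := fun n => Nat.iter n h beta).
  assert (hstep : forall n, lt (gam n) (gam (S n))).
  { intro n. exact (proj1 (hh' (gam n))). }
  assert (hmono : forall n k, le lt (gam n) (gam (n + k))).
  { intros n k. induction k.
    - rewrite Nat.add_0_r. right; auto.
    - rewrite Nat.add_succ_r. left. eapply (o_le_lt hk); eauto. }
  destruct (countable_bound hk gam) as [u0 hu0].
  destruct (least hk (fun u => forall n, lt (gam n) u) u0 hu0) as (g&hg&hgl).
  assert (hbelow : forall x, lt x g -> exists n, le lt x (gam n)).
  { intros x hx. apply NNPP; intro Hn. assert (forall n, lt (gam n) x).
    { intro n. destruct (o_tot hk (gam n) x) as [e|[e|e]]; auto; exfalso; apply Hn; exists n.
      - right; auto.
      - left; auto. }
    apply (o_irr hk x). eapply (o_lt_le hk); [exact hx|]. apply hgl; auto. }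
  exists g. split; [exact (hg 0)|].
  intros a ha. destruct (hbelow a ha) as [k1 hk1].
  apply (proj1 (hC a)).
  - split; [exists beta; exact (hg 0)|].
    intros n hn. destruct (hbelow n hn) as [k hk']. exists (gam (S k)). split.
    + eapply (o_le_lt hk); eauto.
    + apply hg.
  - intros n hn. destruct (hbelow n hn) as [k2 hk2].
    pose (k := S (k1 + k2)).
    assert (ha' : lt a (gam k)).
    { eapply (o_le_lt hk); [exact hk1|]. eapply (o_le_lt hk); [apply (hmono k1 k2)|]. apply hstep. }
    assert (h2k : lt (gam k2) (gam k)).
    { eapply (o_le_lt hk); [|apply hstep]. rewrite Nat.add_comm. apply hmono. }
    exists (m (a, gam k)). destruct (hm' (a, gam k)) as [hC1 hC2]; simpl in hC1, hC2.
    split; [auto|split].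
    + eapply (o_le_lt hk); [exact hk2|]. eapply (o_tr hk); eauto.
    + eapply (o_tr hk); [apply (proj2 (hh' (gam k)) a ha')|]. exact (hg (S k)).
Qed.

Lemma diag_club {T} {lt : T -> T -> Prop} (hk : regular_uncountable_cardinal lt)
  (C : T -> T -> Prop) (hC : forall a, club lt (C a)) :
  club lt (fun x => forall a, lt a x -> C a x).
Proof.
  split.
  - intros g hg H a ha. apply (proj1 (hC a)); auto. intros n hn.
    destruct (o_max hk n a) as (w&h1&h2&h3).
    assert (hw : lt w g) by (destruct h3; subst; auto).
    destruct (H w hw) as (c&hc&hwc&hcg). exists c. split; [|split; auto].
    + apply hc. eapply (o_le_lt hk); eauto.
    + eapply (o_le_lt hk); eauto.
  - intro b. destruct (diag_cof hk C hC b) as (g&h1&h2). exists g. split; auto. left; auto.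
Qed.

Lemma inter2 {T} {lt : T -> T -> Prop} (hk : regular_uncountable_cardinal lt)
  (C1 C2 : T -> Prop) : club lt C1 -> club lt C2 -> club lt (fun x => C1 x /\ C2 x).
Proof.
  intros h1 h2. split.
  - intros g hg H. split; [apply (proj1 h1) | apply (proj1 h2)]; auto; intros n hn;
      destruct (H n hn) as (c&[e1 e2]&e3); eauto.
  - intro b. destruct (no_max hk b) as [a1 ha1].
    pose (Cf := fun a x => (a = b /\ C1 x) \/ (a <> b /\ C2 x)).
    assert (hCf : forall a, club lt (Cf a)).
    { intro a. destruct (classic (a = b)) as [e|e].
      - apply (club_ext C1); auto. intro x; unfold Cf; split; [tauto|]. intros [[_ h]|[h _]]; tauto.
      - apply (club_ext C2); auto. intro x; unfold Cf; split; [tauto|]. intros [[h _]|[_ h]]; tauto. }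
    destruct (diag_cof hk Cf hCf a1) as (g&hg&hD).
    assert (hbg : lt b g) by (eapply (o_tr hk); eauto).
    exists g. split; [split|left; auto].
    + destruct (hD b hbg) as [[_ h]|[h _]]; [auto| congruence].
    + destruct (hD a1 hg) as [[e _]|[_ h]]; [subst; exfalso; exact (o_irr hk _ ha1)| auto].
Qed.

Lemma stat_nonempty {T} {lt : T -> T -> Prop} (S : T -> Prop) :
  stationary lt S -> exists x, S x.
Proof.
  intro H. destruct (H (fun _ => True)) as (x&hx&_).
  - split; [intros ? ? ?; exact I| intro b; exists b; split; [exact I| right; reflexivity]].
  - eauto.
Qed.

Lemma not_stat {T} {lt : T -> T -> Prop} (S : T -> Prop) :
  ~ stationary lt S -> exists C, club lt C /\ forall x, C x -> ~ S x.
Proof.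
  intro H. unfold stationary in H. apply not_all_ex_not in H. destruct H as [C H].
  apply imply_to_and in H. destruct H as [h1 h2]. exists C. split; auto.
  intros x hC hS. apply h2. eauto.
Qed.

Lemma stat_mono {T} {lt : T -> T -> Prop} (A B : T -> Prop) :
  (forall x, A x -> B x) -> stationary lt A -> stationary lt B.
Proof. intros h H C hC. destruct (H C hC) as (x&h1&h2); eauto. Qed.

Lemma union2 {T} {lt : T -> T -> Prop} (hk : regular_uncountable_cardinal lt) (A B : T -> Prop) :
  stationary lt (fun x => A x \/ B x) -> stationary lt A \/ stationary lt B.
Proof.
  intro H. apply NNPP; intro H2. apply not_or_and in H2. destruct H2 as [n1 n2].
  destruct (not_stat _ n1) as (C1&hC1&d1). destruct (not_stat _ n2) as (C2&hC2&d2).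
  destruct (H _ (inter2 hk _ _ hC1 hC2)) as (x&[ha|hb]&[c1 c2]).
  - exact (d1 x c1 ha).
  - exact (d2 x c2 hb).
Qed.

Lemma stat_tail {T} {lt : T -> T -> Prop} (hk : regular_uncountable_cardinal lt) (S : T -> Prop) z :
  stationary lt S -> stationary lt (fun x => S x /\ lt z x).
Proof.
  intros HS C hC.
  assert (ht : club lt (fun x => lt z x)).
  { split.
    - intros g [[n hn] _] H. destruct (H n hn) as (c&hc&_&hcg). eapply (o_tr hk); eauto.
    - intro b. destruct (o_max hk b z) as (w&h1&h2&_). destruct (no_max hk w) as [y hy].
      exists y. split; [eapply (o_le_lt hk); eauto| left; eapply (o_le_lt hk); eauto]. }
  destruct (HS _ (inter2 hk _ _ hC ht)) as (x&hx&[c1 c2]). eauto.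
Qed.

Lemma fodor {T} {lt : T -> T -> Prop} (hk : regular_uncountable_cardinal lt)
  (S : T -> Prop) (P : T -> T -> Prop) :
  stationary lt S -> (forall x, S x -> exists a, lt a x /\ P a x) ->
  exists a, stationary lt (fun x => S x /\ P a x).
Proof.
  intros HS HP. apply NNPP; intro H.
  assert (hc : forall a, exists C, club lt C /\ forall x, C x -> ~ (S x /\ P a x)).
  { intro a. apply not_stat. intro h. apply H. eauto. }
  destruct (fchoice _ hc) as [Cf hCf].
  destruct (HS _ (diag_club hk Cf (fun a => proj1 (hCf a)))) as (x&hx&hD).
  destruct (HP x hx) as (a&ha&hpa).
  exact (proj2 (hCf a) x (hD a ha) (conj hx hpa)).
Qed.

Definition Phi {T} (lt : T -> T -> Prop) (I : (T -> Prop) -> Prop) (A : T -> Prop) : Prop :=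
  forall Q : T -> Prop,
    (forall x, Q x -> is_limit lt x) -> stationary lt Q ->
    (forall l m, Q l -> is_succ lt l m -> A m) ->
    exists Y : T -> Prop,
      (forall x, Y x -> Lset lt x) /\ I Y /\
      (forall l, Bset lt Y l -> Q l) /\ stationary lt (Bset lt Y).

Lemma Phi_restrict {T} {lt : T -> T -> Prop} I A (Q Q' : T -> Prop) :
  Phi lt I A -> (forall x, Q' x -> Q x) ->
  (forall x, Q x -> is_limit lt x) -> stationary lt Q' ->
  (forall l m, Q' l -> is_succ lt l m -> A m) ->
    exists Y : T -> Prop,
      (forall x, Y x -> Lset lt x) /\ I Y /\
      (forall l, Bset lt Y l -> Q l) /\ stationary lt (Bset lt Y).
Proof.
  intros HP hsub hl hs hA. destruct (HP Q') as (Y&h1&h2&h3&h4); auto.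
  exists Y; repeat split; auto.
Qed.

Lemma Phi_all {T} {lt : T -> T -> Prop} (hk : regular_uncountable_cardinal lt)
  (I : (T -> Prop) -> Prop) (hI : is_ideal lt I)
  (hINS : forall A, I A -> nonstationary lt A) A :
  Pcl lt I A -> Phi lt I A.
Proof.
  intro H. induction H as [A hA|A B hB IH hsub|A B hA IHA hB IHB|beta X hX IH|A X hA hX IH].
  - intros Q hQl hQs hQA.
    exists (fun m => A m /\ exists l, Q l /\ is_succ lt l m). split; [|split; [|split]].
    + intros x [_ [l [hl hs]]]. exists l; split; auto.
    + apply (proj1 hI) with A; auto. intros x [h _]; auto.
    + intros l [m [[_ [l' [hq hs']]] hs]]. rewrite (succ_pred_unique hk _ _ _ hs hs'). auto.
    + intros C hC. destruct (hQs C hC) as [x [hx hCx]].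
      destruct (succ_exists hk x) as [m hm]. exists x. split; auto.
      exists m. split; eauto.
  - intros Q hQl hQs hQA. apply IH; auto. intros l m h1 h2. eauto.
  - intros Q hQl hQs hQA.
    pose (QA := fun l => Q l /\ exists m, is_succ lt l m /\ A m).
    pose (QB := fun l => Q l /\ exists m, is_succ lt l m /\ B m).
    assert (hs : stationary lt (fun l => QA l \/ QB l)).
    { apply (stat_mono Q); auto. intros l hl. destruct (succ_exists hk l) as [m hm].
      destruct (hQA l m hl hm); [left|right]; split; eauto. }
    destruct (union2 hk _ _ hs) as [h|h].
    + apply (Phi_restrict I A Q QA); auto. { intros x [e _]; auto. }
      intros l m [_ [m' [h1 h2]]] h3. rewrite (succ_unique hk _ _ _ h3 h1). auto.
    + apply (Phi_restrict I B Q QB); auto. { intros x [e _]; auto. }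
      intros l m [_ [m' [h1 h2]]] h3. rewrite (succ_unique hk _ _ _ h3 h1). auto.
  - intros Q hQl hQs hQA.
    pose (P := fun a l => lt a beta /\ exists m, is_succ lt l m /\ X a m).
    destruct (fodor hk (fun x => Q x /\ lt beta x) P) as [a ha].
    + apply stat_tail; auto.
    + intros l [hl hbl]. destruct (succ_exists hk l) as [m hm].
      destruct (hQA l m hl hm) as (a&h1&h2). exists a. split.
      * eapply (o_tr hk); eauto.
      * split; eauto.
    + destruct (stat_nonempty _ ha) as (x&_&hab&_).
      apply (Phi_restrict I (X a) Q (fun x => (Q x /\ lt beta x) /\ P a x) (IH a hab)); auto.
      { intros y [[hy _] _]; exact hy. }
      intros l m [_ [_ [m' [h1 h2]]]] h3. rewrite (succ_unique hk _ _ _ h3 h1). auto.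
  - intros Q hQl hQs hQA.
    pose (Q1 := fun l => Q l /\ exists a, lt a l /\ (A a /\ exists m, is_succ lt l m /\ X a m)).
    pose (Q2 := fun l => A l /\ Q l).
    assert (hs : stationary lt (fun l => Q1 l \/ Q2 l)).
    { apply (stat_mono Q); auto. intros l hl. destruct (succ_exists hk l) as [m hm].
      destruct (hQA l m hl hm) as (a&ham&haA&haX).
      destruct (o_tot hk a l) as [e|[e|e]].
      - left. split; auto. exists a. split; auto. split; eauto.
      - right. subst. split; auto.
      - exfalso. destruct hm as [_ hm]. apply (o_irr hk a). eapply (o_lt_le hk); [exact ham| exact (hm a e)]. }
    destruct (union2 hk _ _ hs) as [h|h].
    + destruct (fodor hk Q1 (fun a l => A a /\ exists m, is_succ lt l m /\ X a m) h) as [a ha].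
      { intros l [_ hl]. exact hl. }
      destruct (stat_nonempty _ ha) as (x&_&haA&_).
      apply (Phi_restrict I (X a) Q (fun x => Q1 x /\ (A a /\ exists m, is_succ lt x m /\ X a m)) (IH a haA)); auto.
      { intros y [[hy _] _]; exact hy. }
      intros l m [_ [_ [m' [h1 h2]]]] h3. rewrite (succ_unique hk _ _ _ h3 h1). auto.
    + exfalso. apply (hINS Q2); auto. apply (proj1 hI) with A; auto. intros x [e _]; auto.
Qed.

Theorem theorem3p12 (T : Type) (lt : T -> T -> Prop)
  (hk : regular_uncountable_cardinal lt)
  (I : (T -> Prop) -> Prop) (hI : is_ideal lt I)
  (hINS : forall A, I A -> nonstationary lt A)
  (hL : Pcl lt I (Lset lt)) :
  forall Q : T -> Prop,
    (forall x, Q x -> is_limit lt x) -> stationary lt Q ->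
    exists Y : T -> Prop,
      (forall x, Y x -> Lset lt x) /\ I Y /\
      (forall l, Bset lt Y l -> Q l) /\ stationary lt (Bset lt Y).
Proof.
  intros Q hQl hQs. apply (Phi_all hk I hI hINS _ hL Q); auto.
  intros l m hq hs. exists l. auto.
Qed.
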